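(* Let $R\in\mathbb{R}^{n\times d}$ have rows $x_1,\dots,x_n$ with $\|x_i\|_2\le B$, assumed centered, and let $\hat\Sigma_R=\frac1n R^\top R$ with eigenvalues $\lambda_1(\hat\Sigma_R)\ge\dots\ge\lambda_d(\hat\Sigma_R)$. Suppose $\mathrm{gap}_k(R):=\lambda_k(\hat\Sigma_R)-\lambda_{k+1}(\hat\Sigma_R)>0$. Then $$\mathrm{RS}_{P_k}(R)\le\frac{2\sqrt2\,B^2}{(n+1)\,\mathrm{gap}_k(R)}.$$
   Context: For a finite set of vectors $S$, $\hat\Sigma_S=\frac{1}{|S|}\sum_{x\in S}xx^\top$ (so $\hat\Sigma_{R\cup\{x\}}=\frac{1}{n+1}(\sum_{i}x_ix_i^\top+xx^\top)$). For a symmetric matrix $\Sigma$, $P_k(\Sigma)=V_kV_k^\top$ where $V_k$ contains orthonormal eigenvectors for the $k$ largest eigenvalues. The retain sensitivity of the rank-$k$ projector is $\mathrm{RS}_{P_k}(R)=\max_{x}\|P_k(\hat\Sigma_{R\cup\{x\}})-P_k(\hat\Sigma_R)\|_F$, the maximum over added points $x\in\mathbb{R}^d$ with $\|x\|_2\le B$. *)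

(* Defs.v *)
From mathcomp Require Import all_boot all_order all_algebra.
From mathcomp Require Import reals.
Set Implicit Arguments. Unset Strict Implicit. Unset Printing Implicit Defensive.
Import Order.TTheory GRing.Theory Num.Theory.
Local Open Scope ring_scope.

Section Defs.
Variable R : realType.

Definition vnorm (d : nat) (x : 'rV[R]_d) : R := Num.sqrt (\sum_j x 0 j ^+ 2).

Definition frob (m n : nat) (A : 'M[R]_(m, n)) : R :=
  Num.sqrt (\sum_i \sum_j A i j ^+ 2).

Definition emp_cov (n d : nat) (X : 'M[R]_(n, d)) : 'M[R]_d :=
  (n%:R)^-1 *: (X^T *m X).

Definition emp_cov_add (n d : nat) (X : 'M[R]_(n, d)) (x : 'rV[R]_d) : 'M[R]_d :=
  (n.+1%:R)^-1 *: (X^T *m X + x^T *m x).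

Definition sorted_eigendecomp (d : nat) (S V : 'M[R]_d) (lam : 'rV[R]_d) : Prop :=
  [/\ V^T *m V = 1%:M,
      S *m V = V *m diag_mx lam &
      forall i j : 'I_d, (i <= j)%N -> lam 0 j <= lam 0 i].

(* P_k built from such a decomposition: V_k V_k^T where V_k are the first k
   columns of V (eigenvectors of the k largest eigenvalues). *)
Definition topk_proj (d : nat) (k : nat) (V : 'M[R]_d) : 'M[R]_d :=
  \sum_(i < d | (i < k)%N) (col i V *m (col i V)^T).

(* lambda_j (1-indexed, j = 1..d) read off the sorted eigenvalue vector *)
Definition eigval (d : nat) (lam : 'rV[R]_d) (j : nat) : R :=
  nth 0 [seq lam 0 i | i <- enum 'I_d] j.-1.

Definition gapk (d : nat) (lam : 'rV[R]_d) (k : nat) : R :=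
  eigval lam k - eigval lam k.+1.

End Defs.

(* Main.v *)
Require Import Defs.
From mathcomp Require Import all_boot all_order all_algebra.
From mathcomp Require Import reals.
From mathcomp Require Import ring lra zify.
Set Implicit Arguments. Unset Strict Implicit.
Import Order.TTheory GRing.Theory Num.Theory.
Local Open Scope ring_scope.

Section Aux.
Variable R : realType.

Lemma pid_diag (d k : nat) :
  (pid_mx k : 'M[R]_d) = diag_mx (\row_(j < d) ((j < k)%N)%:R).
Proof.
apply/matrixP => i j; rewrite !mxE.
case: (eqVneq i j) => [->|ne]; first by rewrite eqxx /= mulr1n.
rewrite mulr0n; have -> : (i == j :> nat) = false.
  by apply/negbTE; apply: contra ne => /eqP/val_inj ->.
by [].
Qed.

Lemma copid_diag (d k : nat) :
  (copid_mx k : 'M[R]_d) = diag_mx (\row_(j < d) ((k <= j)%N)%:R).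
Proof.
apply/matrixP => i j; rewrite /copid_mx !mxE.
case: (eqVneq i j) => [->|ne].
  by rewrite eqxx /= mulr1n; case: ltnP => _; rewrite ?subrr ?subr0.
rewrite mulr0n; have -> : (i == j :> nat) = false.
  by apply/negbTE; apply: contra ne => /eqP/val_inj ->.
by rewrite subrr.
Qed.

Lemma quad_diag (d : nat) (a l : 'rV[R]_d) :
  (a *m diag_mx l *m a^T) 0 0 = \sum_j a 0 j ^+ 2 * l 0 j.
Proof.
rewrite mul_mx_diag !mxE; apply: eq_bigr => j _; rewrite !mxE; ring.
Qed.

Lemma quad_id (d : nat) (a : 'rV[R]_d) :
  (a *m a^T) 0 0 = \sum_j a 0 j ^+ 2.
Proof. by rewrite !mxE; apply: eq_bigr => j _; rewrite !mxE expr2. Qed.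

Lemma mask_row (d k : nat) (D : 'rV[R]_d) (j : 'I_d) :
  (D *m diag_mx (\row_(j < d) ((k <= j)%N)%:R)) 0 j = D 0 j * ((k <= j)%N)%:R.
Proof. by rewrite mul_mx_diag !mxE. Qed.

Lemma rayleigh (d : nat) (S V : 'M[R]_d) (lam a : 'rV[R]_d) :
  V^T *m V = 1%:M -> S *m V = V *m diag_mx lam ->
  ((a *m V^T) *m S *m (a *m V^T)^T) 0 0 = \sum_j a 0 j ^+ 2 * lam 0 j
  /\ ((a *m V^T) *m (a *m V^T)^T) 0 0 = \sum_j a 0 j ^+ 2.
Proof.
move=> VV SV; rewrite trmx_mul trmxK; split.
  have -> : a *m V^T *m S *m (V *m a^T) = a *m V^T *m (S *m V) *m a^T by rewrite !mulmxA.
  by rewrite SV !mulmxA -(mulmxA a) VV mulmx1 quad_diag.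
have -> : a *m V^T *m (V *m a^T) = a *m (V^T *m V) *m a^T by rewrite !mulmxA.
by rewrite VV mulmx1 quad_id.
Qed.

Lemma weyl_lb (d k : nat) (S S' V V' : 'M[R]_d) (lam mu : 'rV[R]_d) (c : R)
  (i0 : 'I_d) :
  i0.+1 = k ->
  V^T *m V = 1%:M -> V'^T *m V' = 1%:M ->
  S *m V = V *m diag_mx lam -> S' *m V' = V' *m diag_mx mu ->
  (forall i j : 'I_d, (i <= j)%N -> lam 0 j <= lam 0 i) ->
  (forall i j : 'I_d, (i <= j)%N -> mu 0 j <= mu 0 i) ->
  0 <= c ->
  (forall v : 'rV_d, c * (v *m S *m v^T) 0 0 <= (v *m S' *m v^T) 0 0) ->
  c * lam 0 i0 <= mu 0 i0.
Proof.
move=> hk VV VV' SV SV' slam smu c0 hS.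
pose A := (pid_mx k : 'M[R]_d) *m V^T.
pose B := (copid_mx k.-1 : 'M[R]_d) *m V'^T.
have uV : V^T \in unitmx by case: (mulmx1_unit VV).
have uV' : V'^T \in unitmx by case: (mulmx1_unit VV').
have rA : \rank A = k.
  by rewrite /A mxrankMfree ?row_free_unit // rank_pid_mx // -hk.
have rB : \rank B = (d - k.-1)%N.
  by rewrite /B mxrankMfree ?row_free_unit // rank_copid_mx // -hk /= ltnW.
have rC : \rank (A :&: B)%MS != 0%N.
  have := mxrank_sum_cap A B; rewrite rA rB.
  have := rank_leq_col (A + B)%MS.
  have : (k.-1 < d)%N by rewrite -hk /=.
  move=> h1 h2 h3; apply/eqP => h0; move: h3; rewrite h0 addn0 => h3.
  have : (d < k + (d - k.-1))%N by rewrite -hk /=; have := ltn_ord i0; lia.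
  by rewrite -h3 ltnNge h2.
pose v := nz_row (A :&: B)%MS.
have vnz : v != 0 by rewrite /v nz_row_eq0 -mxrank_eq0.
have vA : (v <= A)%MS by apply: submx_trans (nz_row_sub _) (capmxSl _ _).
have vB : (v <= B)%MS by apply: submx_trans (nz_row_sub _) (capmxSr _ _).
case/submxP: vA => DA eA; case/submxP: vB => DB eB.
pose a := DA *m (pid_mx k : 'M[R]_d).
pose b := DB *m (copid_mx k.-1 : 'M[R]_d).
have ea : v = a *m V^T by rewrite eA /A /a mulmxA.
have eb : v = b *m V'^T by rewrite eB /B /b mulmxA.
have [qa na] := rayleigh a VV SV.
have [qb nb] := rayleigh b VV' SV'.
rewrite -ea in qa na; rewrite -eb in qb nb.
have a0 : forall j : 'I_d, (k <= j)%N -> a 0 j = 0.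
  move=> j hj; rewrite /a pid_diag mul_mx_diag !mxE.
  by rewrite ltnNge hj mulr0.
have b0 : forall j : 'I_d, (j < k.-1)%N -> b 0 j = 0.
  move=> j hj; rewrite /b copid_diag mul_mx_diag !mxE.
  by rewrite leqNgt hj mulr0.
have Npos : 0 < (v *m v^T) 0 0.
  rewrite quad_id lt_def sumr_ge0 ?andbT => [|j _]; last exact: sqr_ge0.
  apply: contra vnz => /eqP h; apply/eqP/matrixP => i j.
  rewrite (ord1 i) mxE.
  have := psumr_eq0P (fun j _ => sqr_ge0 (v 0 j)) h (i:=j) isT.
  by move/eqP; rewrite sqrf_eq0 => /eqP.
have la : lam 0 i0 * (v *m v^T) 0 0 <= (v *m S *m v^T) 0 0.
  rewrite na qa mulr_sumr; apply: ler_sum => j _.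
  case: (ltnP j k) => hj; last by rewrite a0 // expr0n /= !mul0r mulr0.
  rewrite [X in X <= _]mulrC; apply: ler_wpM2l; first exact: sqr_ge0.
  by apply: slam; rewrite -ltnS hk.
have lb : (v *m S' *m v^T) 0 0 <= mu 0 i0 * (v *m v^T) 0 0.
  rewrite nb qb mulr_sumr; apply: ler_sum => j _.
  case: (ltnP j k.-1) => hj; first by rewrite b0 // expr0n /= !mul0r mulr0.
  rewrite [X in _ <= X]mulrC; apply: ler_wpM2l; first exact: sqr_ge0.
  by apply: smu; rewrite -hk /= in hj.
have h := hS v.
have : c * lam 0 i0 * (v *m v^T) 0 0 <= mu 0 i0 * (v *m v^T) 0 0.
  apply: le_trans lb; apply: le_trans h; rewrite -mulrA; exact: ler_wpM2l.
by rewrite ler_pM2r.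
Qed.

Definition fr2 (d : nat) (M : 'M[R]_d) := \sum_i \sum_j M i j ^+ 2.

Lemma fr2_tr (d : nat) (M : 'M[R]_d) : fr2 M = \tr (M *m M^T).
Proof.
rewrite /fr2 /mxtrace; apply: eq_bigr => i _; rewrite !mxE.
by apply: eq_bigr => j _; rewrite !mxE expr2.
Qed.

Lemma fr2_conj (d : nat) (M U U' : 'M[R]_d) :
  U *m U^T = 1%:M -> U' *m U'^T = 1%:M -> fr2 (U^T *m M *m U') = fr2 M.
Proof.
move=> hU hU'; rewrite !fr2_tr !trmx_mul trmxK.
have -> : U^T *m M *m U' *m (U'^T *m (M^T *m U)) = U^T *m (M *m (U' *m U'^T) *m M^T *m U).
  by rewrite !mulmxA.
rewrite hU' mulmx1 mxtrace_mulC.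
by rewrite -(mulmxA _ U) hU mulmx1.
Qed.

Lemma topkE (d k : nat) (V : 'M[R]_d) :
  topk_proj k V = V *m pid_mx k *m V^T.
Proof.
apply/matrixP => a b; rewrite pid_diag mul_mx_diag /topk_proj summxE !mxE.
rewrite [RHS](bigID (fun i : 'I_d => (i < k)%N)) /= [X in _ = _ + X]big1 ?addr0.
  by apply: eq_bigr => i hi; rewrite !mxE big_ord1 !mxE hi mulr1.
by move=> i /negbTE hi; rewrite !mxE hi mulr0 mul0r.
Qed.


Lemma fr2_comm (d k : nat) (W : 'M[R]_d) :
  W *m W^T = 1%:M -> W^T *m W = 1%:M ->
  fr2 (W *m pid_mx k - pid_mx k *m W) =
  2 * \sum_(i < d) \sum_(j < d) (((k <= i)%N)%:R * ((j < k)%N)%:R * W i j ^+ 2).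
Proof.
move=> hr hc.
pose m (i : 'I_d) : R := ((i < k)%N)%:R.
have km : forall i : 'I_d, ((k <= i)%N)%:R = 1 - m i :> R.
  by move=> i; rewrite /m; case: ltnP => _; rewrite ?subrr ?subr0.
have row1 : forall i, \sum_j W i j ^+ 2 = 1.
  move=> i; have := congr1 (fun M : 'M[R]_d => M i i) hr.
  rewrite !mxE eqxx /= mulr1n => <-; apply: eq_bigr => j _; by rewrite !mxE expr2.
have col1 : forall j, \sum_i W i j ^+ 2 = 1.
  move=> j; have := congr1 (fun M : 'M[R]_d => M j j) hc.
  rewrite !mxE eqxx /= mulr1n => <-; apply: eq_bigr => i _; by rewrite !mxE expr2.
have mm : forall i, m i * m i = m i by move=> i; rewrite /m; case: ltnP => _; rewrite ?mulr0 ?mulr1.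
pose T1 := \sum_i \sum_j ((1 - m i) * m j * W i j ^+ 2).
pose T2 := \sum_i \sum_j (m i * (1 - m j) * W i j ^+ 2).
pose T0 := \sum_i \sum_j (m i * m j * W i j ^+ 2).
have e1 : fr2 (W *m pid_mx k - pid_mx k *m W) = T1 + T2.
  rewrite /fr2 /T1 /T2 -big_split; apply: eq_bigr => i _ /=.
  rewrite -big_split; apply: eq_bigr => j _ /=.
  rewrite !pid_diag mul_mx_diag mul_diag_mx !mxE -/(m i) -/(m j).
  have hi := mm i; have hj := mm j.
  rewrite /m; case: ltnP => _; case: ltnP => _; rewrite /= ?mulr1n ?mulr0n;
  rewrite ?mulr1 ?mul1r ?mulr0 ?mul0r ?subrr ?subr0 ?sub0r ?add0r ?addr0 ?sqrrN ?expr0n ?mulr0 ?mul0r ?addr0;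
  rewrite ?mul1r //.
have e2 : T2 + T0 = \sum_i m i.
  rewrite /T2 /T0 -big_split; apply: eq_bigr => i _ /=.
  rewrite -big_split /= -[RHS]mulr1 -[in RHS](row1 i) mulr_sumr; apply: eq_bigr => j _ /=; ring.
have e3 : T1 + T0 = \sum_i m i.
  rewrite /T1 /T0 -big_split /=.
  under eq_bigr => i _ do rewrite -big_split /=.
  rewrite exchange_big; apply: eq_bigr => j _ /=.
  rewrite -[RHS]mulr1 -[in RHS](col1 j) mulr_sumr; apply: eq_bigr => i _ /=; ring.
have e4 : T2 = T1 by apply: (addIr T0); rewrite e2 e3.
rewrite e1 e4 mulr2n mulrDl mul1r; congr (_ + _); apply: eq_bigr => i _; apply: eq_bigr => j _;
  by rewrite km.
Qed.

End Aux.

Unset Implicit Arguments.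
Set Strict Implicit.

Theorem mainTheorem9 (RR : realType) (n d k : nat) (B : RR)
    (X : 'M[RR]_(n, d)) (V : 'M[RR]_d) (lam : 'rV[RR]_d) :
  (0 < n)%N -> (0 < k)%N -> (k < d)%N ->
  (forall i : 'I_n, vnorm (row i X) <= B) ->
  \sum_(i < n) row i X = 0 ->
  sorted_eigendecomp (emp_cov X) V lam ->
  0 < gapk lam k ->
  forall (x : 'rV[RR]_d) (V' : 'M[RR]_d) (lam' : 'rV[RR]_d),
    vnorm x <= B ->
    sorted_eigendecomp (emp_cov_add X x) V' lam' ->
    frob (topk_proj k V' - topk_proj k V)
      <= 2 * Num.sqrt 2 * B ^+ 2
         / (n.+1%:R * (gapk lam k)).
Proof.
move=> n0 k0 kd _ _ [VV SV slam] gpos x V' lam' hx [VV' SV' smu].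
set g := gapk lam k in gpos *.
have VVt : V *m V^T = 1%:M := mulmx1C VV.
have VVt' : V' *m V'^T = 1%:M := mulmx1C VV'.
have nR : 0 < n%:R :> RR by rewrite ltr0n.
set N : RR := n.+1%:R.
have NR : 0 < N by rewrite ltr0n.
have hk1 : (k.-1 < d)%N by lia.
pose i0 : 'I_d := Ordinal hk1.
pose i1 : 'I_d := Ordinal kd.
have hi0 : i0.+1 = k by rewrite /= prednK.
have eg : g = lam 0 i0 - lam 0 i1.
  rewrite /g /gapk /eigval /= (nth_map i0) ?size_enum_ord // (nth_map i0) ?size_enum_ord //.
  by rewrite -[k.-1]/(nat_of_ord i0) -[k]/(nat_of_ord i1) !nth_ord_enum.
have SS : (emp_cov X)^T = emp_cov X by rewrite /emp_cov linearZ /= trmx_mul trmxK.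
have c0 : 0 <= n%:R / N by rewrite divr_ge0 // ltW.
have hS : forall v : 'rV_d, n%:R / N * (v *m emp_cov X *m v^T) 0 0
                           <= (v *m emp_cov_add X x *m v^T) 0 0.
  move=> v.
  have q2 : 0 <= (v *m (x^T *m x) *m v^T) 0 0.
    have -> : v *m (x^T *m x) *m v^T = (v *m x^T) *m (v *m x^T)^T.
      by rewrite trmx_mul trmxK !mulmxA.
    by rewrite quad_id sumr_ge0 // => i _; apply: sqr_ge0.
  rewrite /emp_cov /emp_cov_add -!scalemxAr -!scalemxAl mulmxDr mulmxDl.
  move: q2; move: (v *m (x^T *m x) *m v^T) => M2 q2.
  move: (v *m (X^T *m X) *m v^T) => M1.
  rewrite !mxE -/N.
  have -> : n%:R / N * (n%:R^-1 * M1 0 0) = N^-1 * M1 0 0.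
    by field; apply/andP; split; apply/negP => /eqP; lra.
  by apply: ler_wpM2l; [rewrite invr_ge0 ltW | rewrite lerDl].
have hw := weyl_lb hi0 VV VV' SV SV' slam smu c0 hS.
have hw' : n%:R * lam 0 i0 <= N * lam' 0 i0.
  have := ler_wpM2l (ltW NR) hw.
  have -> : N * (n%:R / N * lam 0 i0) = n%:R * lam 0 i0.
    by field; apply/negP => /eqP; lra.
  by [].
pose W := V^T *m V'.
pose y := x *m V.
pose z := x *m V'.
have eM : N *: (W *m diag_mx lam') = n%:R *: (diag_mx lam *m W) + y^T *m z.
  have e1 : V^T *m (N *: emp_cov_add X x) *m V' = N *: (W *m diag_mx lam').
    by rewrite -scalemxAr -scalemxAl -mulmxA SV' mulmxA.
  have e2 : N *: emp_cov_add X x = n%:R *: emp_cov X + x^T *m x.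
    rewrite /emp_cov_add /emp_cov !scalerA !mulfV ?scale1r //; apply: lt0r_neq0 => //.
  have e3 : V^T *m emp_cov X = diag_mx lam *m V^T.
    by rewrite -[emp_cov X]SS -trmx_mul SV trmx_mul tr_diag_mx.
  rewrite -e1 e2 mulmxDr mulmxDl -scalemxAr -scalemxAl e3 /W /y /z trmx_mul.
  by rewrite !mulmxA.
have eW : forall i j, N * (W i j * lam' 0 j) = n%:R * (lam 0 i * W i j) + y 0 i * z 0 j.
  move=> i j; have := congr1 (fun M : 'M[RR]_d => M i j) eM.
  rewrite /= mul_mx_diag mul_diag_mx !mxE big_ord1 !mxE => ->.
  by [].
have bnd : forall i j : 'I_d, (k <= i)%N -> (j < k)%N ->
    W i j ^+ 2 * (n%:R * g) ^+ 2 <= (y 0 i * z 0 j) ^+ 2.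
  move=> i j hi hj.
  have h1 : lam' 0 i0 <= lam' 0 j by apply: smu; rewrite /= -ltnS prednK.
  have h2 : lam 0 i <= lam 0 i1 by apply: slam.
  set D := N * lam' 0 j - n%:R * lam 0 i.
  have eD : D * W i j = y 0 i * z 0 j.
    rewrite /D mulrBl -(mulrA N) (mulrC (lam' 0 j)) eW; ring.
  have hD : n%:R * g <= D.
    rewrite /D eg mulrBr.
    have := ler_wpM2l (ltW NR) h1; have := ler_wpM2l (ltW nR) h2; lra.
  have g0 : 0 <= n%:R * g by rewrite mulr_ge0 // ltW.
  rewrite -eD [X in _ <= X]exprMn [X in X <= _]mulrC; apply: ler_wpM2r; first exact: sqr_ge0.
  by rewrite !expr2; apply: ler_pM.
have T1b : (\sum_(i < d) \sum_(j < d) (((k <= i)%N)%:R * ((j < k)%N)%:R * W i j ^+ 2))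
             * (n%:R * g) ^+ 2 <= (\sum_i y 0 i ^+ 2) * (\sum_j z 0 j ^+ 2).
  rewrite mulr_suml mulr_suml; apply: ler_sum => i _.
  rewrite mulr_suml mulr_sumr; apply: ler_sum => j _.
  case: (leqP k i) => hi; case: (ltnP j k) => hj; rewrite /= ?mulr1n ?mulr0n ?mul1r ?mul0r;
    try by rewrite mulr_ge0 // sqr_ge0.
  by rewrite -exprMn -[X in _ <= X]exprMn exprMn; apply: bnd.
have ny : \sum_i y 0 i ^+ 2 = \sum_i x 0 i ^+ 2.
  by rewrite -!quad_id /y trmx_mul !mulmxA -(mulmxA x V) VVt mulmx1.
have nz : \sum_i z 0 i ^+ 2 = \sum_i x 0 i ^+ 2.
  by rewrite -!quad_id /z trmx_mul !mulmxA -(mulmxA x V') VVt' mulmx1.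
have X2 : \sum_i x 0 i ^+ 2 = vnorm x ^+ 2.
  by rewrite /vnorm sqr_sqrtr // sumr_ge0 // => i _; apply: sqr_ge0.
have v0 : 0 <= vnorm x by apply: sqrtr_ge0.
have eF : frob (topk_proj k V' - topk_proj k V)
          = Num.sqrt (fr2 (topk_proj k V' - topk_proj k V)) by [].
have eC : V^T *m (topk_proj k V' - topk_proj k V) *m V' = W *m pid_mx k - pid_mx k *m W.
  rewrite !topkE mulmxBr mulmxBl !mulmxA -(mulmxA _ V'^T V') VV' mulmx1 VV mul1mx.
  by rewrite -(mulmxA (pid_mx k)).
have WW1 : W *m W^T = 1%:M.
  by rewrite /W trmx_mul trmxK !mulmxA -(mulmxA _ V' V'^T) VVt' mulmx1 VV.
have WW2 : W^T *m W = 1%:M.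
  by rewrite /W trmx_mul trmxK !mulmxA -(mulmxA _ V V^T) VVt mulmx1 VV'.
rewrite eF -(fr2_conj _ VVt VVt') eC fr2_comm //.
move: T1b; rewrite ny nz X2.
set T := \sum_(i < d) \sum_(j < d) _ => T1b.
have T0 : 0 <= T.
  apply: sumr_ge0 => i _; apply: sumr_ge0 => j _.
  by rewrite mulr_ge0 ?sqr_ge0 // mulr_ge0 ?ler0n.
have B0 : 0 <= B := le_trans v0 hx.
have tpos : 0 <= 2 * Num.sqrt 2 * B ^+ 2 / (N * g).
  by rewrite divr_ge0 ?mulr_ge0 ?sqrtr_ge0 ?sqr_ge0 // ltW.
apply: le_trans (_ : Num.sqrt ((2 * Num.sqrt 2 * B ^+ 2 / (N * g)) ^+ 2) <= _);
  last by rewrite sqrtr_sqr ger0_norm.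
apply: ler_wsqrtr.
rewrite expr_div_n [X in X / _]exprMn [X in X * _ / _]exprMn sqr_sqrtr ?ler0n //.
rewrite ler_pdivlMr; last by rewrite exprn_gt0 // mulr_gt0.
have n1 : 1 <= n%:R :> RR by rewrite ler1n.
have hb : N * g <= 2 * (n%:R * g).
  rewrite /N -natr1; nra.
have hb2 : (N * g) ^+ 2 <= 4 * (n%:R * g) ^+ 2.
  have -> : 4 * (n%:R * g) ^+ 2 = (2 * (n%:R * g)) ^+ 2 by ring.
  by rewrite !expr2; apply: ler_pM => //; rewrite ltW // mulr_gt0.
have step1 : T * (N * g) ^+ 2 <= T * (4 * (n%:R * g) ^+ 2) := ler_wpM2l T0 hb2.
have hs : vnorm x ^+ 2 <= B ^+ 2 by rewrite !expr2; apply: ler_pM.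
have hs4 : vnorm x ^+ 2 * vnorm x ^+ 2 <= B ^+ 2 * B ^+ 2.
  by apply: ler_pM => //; apply: sqr_ge0.
have e4 : T * (4 * (n%:R * g) ^+ 2) = 4 * (T * (n%:R * g) ^+ 2) by ring.
have e5 : 2 * T * (N * g) ^+ 2 = 2 * (T * (N * g) ^+ 2) by ring.
have e6 : (B ^+ 2) ^+ 2 = B ^+ 2 * B ^+ 2 by rewrite expr2.
rewrite e5 e6; lra.
Qed.
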